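(* Let $d\ge2$, $n\ge1$, and consider rotor-router aggregation in $\mathbb{Z}^d$ with $n$ particles started at the origin and any initial rotor configuration. Let $u(x)$ be the total number of exits from $x$ made by the $n$ particles, and for a directed edge $(x,y)$ between lattice neighbors let $\kappa(x,y)$ be the number of crossings from $x$ to $y$ minus the number of crossings from $y$ to $x$ made by the $n$ particles. Then for every pair of lattice neighbors $x\sim y$, \[ \big|\,u(y)-u(x)+2d\,\kappa(x,y)\,\big|\le 4d-2. \]
   Context: Rotor-router walk in $\mathbb{Z}^d$: fix a cyclic ordering of the $2d$ unit directions; each site has a rotor pointing in one of them. A particle at $x$ first advances the rotor at $x$ to the next direction in the cyclic order and then steps in that direction. Rotor-router aggregation: $n$ particles start at the origin and are released one at a time; each performs rotor-router walk until reaching a site not occupied by an earlier particle, where it stops. *)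

(* Defs.v *)
From HB Require Import structures.
From mathcomp Require Import all_boot all_order all_algebra.
Set Implicit Arguments. Unset Strict Implicit. Unset Printing Implicit Defensive.
Import Order.TTheory GRing.Theory Num.Theory.

Definition point (d : nat) := {ffun 'I_d -> int}.
(* Unit directions: (coordinate k, sign) ; true = +e_k, false = -e_k. *)
Definition dir (d : nat) := ('I_d * bool)%type.

Definition unitvec d (e : dir d) : point d :=
  [ffun i => if i == e.1 then (if e.2 then 1 else -1) else 0]%R.
Definition shift d (x : point d) (e : dir d) : point d :=
  [ffun i => x i + unitvec e i]%R.
Definition origin d : point d := [ffun _ => 0%R].

Definition neighbors d (x y : point d) : Prop := exists e : dir d, y = shift x e.

(* Rotor states are 'I_(2d); the cyclic ordering of the 2d directions is
   given by an injective (hence bijective) map  ord : 'I_(2d) -> dir d,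
   the successor of state i being ordS i (i.e. i+1 mod 2d). *)
Record state (d : nat) := State {
  rotor : point d -> 'I_(2 * d);
  occ   : seq (point d);          (* sites occupied by earlier particles *)
  pos   : point d
}.

(* One elementary step of the aggregation: if the current particle is on an
   occupied site, advance the rotor there and step in the new rotor
   direction; otherwise the particle stops (occupies the site) and the next
   particle is released at the origin. *)
Definition agg_step d (ord : 'I_(2 * d) -> dir d) (s : state d) : state d :=
  let x := pos s in
  if x \in occ s then
    let r' := fun z => if z == x then ordS (rotor s x) else rotor s z in
    State r' (occ s) (shift x (ord (r' x)))
  else State (rotor s) (x :: occ s) (origin d).

Definition agg_state d (ord : 'I_(2 * d) -> dir d) (rho0 : point d -> 'I_(2 * d))
  (t : nat) : state d :=
  iter t (agg_step ord) (State rho0 [::] (origin d)).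

Definition final_time d ord rho0 (n T : nat) : Prop :=
  size (occ (agg_state (d := d) ord rho0 T)) = n /\
  forall t, t < T -> size (occ (agg_state ord rho0 t)) < n.

Definition exits_at d ord rho0 (t : nat) (x : point d) : bool :=
  let s := agg_state ord rho0 t in (pos s == x) && (x \in occ s).

Definition exits d ord rho0 (T : nat) (x : point d) : nat :=
  count (fun t => exits_at ord rho0 t x) (iota 0 T).

Definition crossings d ord rho0 (T : nat) (x y : point d) : nat :=
  count (fun t => exits_at ord rho0 t x && (pos (agg_state ord rho0 t.+1) == y))
        (iota 0 T).

Definition kappa d ord rho0 (T : nat) (x y : point d) : int :=
  ((crossings (d := d) ord rho0 T x y)%:Z - (crossings ord rho0 T y x)%:Z)%R.

(* Main.v *)
Require Import Defs.
From HB Require Import structures.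
From mathcomp Require Import all_boot all_order all_algebra.
From Stdlib Require Import Lia.
Import Order.TTheory GRing.Theory Num.Theory.

Ltac natlia :=
  repeat match goal with
  | H : is_true (leq _ _) |- _ => apply (elimT ssrnat.leP) in H
  | H : is_true (leq (S _) _) |- _ => apply (elimT ssrnat.ltP) in H
  end;
  repeat match goal with
  | |- _ /\ _ => split
  | |- is_true (leq _ _) => apply (introT ssrnat.leP)
  | |- is_true (leq (S _) _) => apply (introT ssrnat.ltP)
  end;
  change addn with Nat.add in *; change subn with Nat.sub in *; change muln with Nat.mul in *; lia.

Lemma count_div_bound (m w u : nat) : 0 < m ->
  let c := count (fun k => m %| (w + k)) (iota 0 u) in
  m * c <= u + m - 1 /\ u <= m * c + m - 1.
Proof.
move=> m0 c.
have Hc : forall u, count (fun k => m %| (w + k)) (iota 0 u) + (w + m - 1) %/ m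
              = (w + m - 1 + u) %/ m.
  elim=> [|v IH]; first by rewrite addn0.
  rewrite -[v.+1]addn1 iotaD count_cat add0n /= addn0.
  have -> : w + m - 1 + (v + 1) = (w + m - 1 + v).+1 by rewrite addn1 addnS.
  rewrite divnS // -IH.
  have -> : (w + m - 1 + v).+1 = (w + v) + m.
    by rewrite -(prednK m0) subn1 addnS /= addnS addnAC.
  by rewrite (dvdn_addl _ (dvdnn m)) addnAC addnC.
have := Hc u; rewrite -/c => E.
set q0 := (w + m - 1) %/ m in E; set qu := (w + m - 1 + u) %/ m in E.
have h0 := leq_trunc_div (w + m - 1) m.
have h1 := ltn_ceil (w + m - 1) m0.
have h2 := leq_trunc_div (w + m - 1 + u) m.
have h3 := ltn_ceil (w + m - 1 + u) m0.
rewrite -/q0 in h0 h1; rewrite -/qu in h2 h3.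
have E2 : qu * m = q0 * m + c * m by rewrite -E mulnDl addnC.
move: h0 h1 h2 h3 E2; rewrite !(mulnC _ m) !mulnS; clearbody c q0 qu; generalize (m * q0) (m * qu) (m * c); move=> a b c0 H0 H1 H2 H3 H4; natlia.
Qed.

Lemma count_reindex (b f : nat -> bool) (T : nat) :
  count (fun t => b t && f (count b (iota 0 t))) (iota 0 T)
  = count f (iota 0 (count b (iota 0 T))).
Proof.
have C1 : forall (p : pred nat) z, count p [:: z] = p z by move=> p z; rewrite /= addn0.
elim: T => [|T IH]; first by [].
rewrite -[T.+1]addn1 iotaD !count_cat add0n.
have -> : iota T 1 = [:: T] by [].
rewrite !C1 IH.
case: (b T); last by rewrite /= !addn0.
rewrite iotaD count_cat add0n.
have -> : iota (count b (iota 0 T)) 1 = [:: count b (iota 0 T)] by [].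
by rewrite C1.
Qed.

Lemma mod_dvd_iff (N m i0 : nat) : i0 < m ->
  (N %% m == i0) = (m %| N + (m - i0)).
Proof.
move=> lt.
rewrite -{1}(modn_small lt) -(eqn_modDr (m - i0)) (subnKC (ltnW lt)) modnn.
by rewrite /dvdn.
Qed.
Section Dyn.
Variables (d : nat) (ord : 'I_(2 * d) -> dir d) (rho0 : point d -> 'I_(2 * d)).

Lemma agg_stateS t : agg_state ord rho0 t.+1 = agg_step ord (agg_state ord rho0 t).
Proof. by rewrite /agg_state iterS. Qed.

Lemma exitsS t x : exits ord rho0 t.+1 x = exits ord rho0 t x + exits_at ord rho0 t x.
Proof. by rewrite /exits -[t.+1]addn1 iotaD count_cat add0n /= addn0. Qed.

Lemma rotor_val t x : 0 < 2 * d ->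
  val (rotor (agg_state ord rho0 t) x) = (rho0 x + exits ord rho0 t x) %% (2 * d).
Proof.
move=> m0; elim: t => [|t IH].
  by rewrite /exits /= addn0 modn_small.
rewrite exitsS /exits_at agg_stateS /agg_step.
case Hin: (pos (agg_state ord rho0 t) \in occ (agg_state ord rho0 t)) => /=.
  case: (eqVneq x (pos (agg_state ord rho0 t))) => [Ex|Nx].
    rewrite -Ex in Hin *; rewrite Hin /= IH -addn1 modnDml addnA.
    by [].
  by rewrite /= addn0.
case: (eqVneq (pos (agg_state ord rho0 t)) x) => [Ex|Nx] /=.
  by move: Hin; rewrite Ex => -> /=; rewrite addn0.
by rewrite addn0.
Qed.

Lemma step_pos t x : exits_at ord rho0 t x ->
  pos (agg_state ord rho0 t.+1) = shift x (ord (ordS (rotor (agg_state ord rho0 t) x))).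
Proof.
rewrite /exits_at agg_stateS /agg_step => /andP[/eqP Ex Hin].
by rewrite Ex Hin /= eqxx.
Qed.

End Dyn.

Lemma shift_inj d (x : point d) (e1 e2 : dir d) : shift x e1 = shift x e2 -> e1 = e2.
Proof.
move/ffunP/(_ e1.1); rewrite !ffunE eqxx => /addrI.
case: e1 e2 => [k1 s1] [k2 s2] /=.
case: (eqVneq k1 k2) => [<-|ne].
  by case: s1; case: s2.
by case: s1.
Qed.

Lemma shift_sym d (x : point d) (e : dir d) : x = shift (shift x e) (e.1, ~~ e.2).
Proof.
apply/ffunP => i; rewrite !ffunE /=.
case: (i == e.1); last by rewrite !addr0.
by case: e.2 => /=; rewrite ?addrK ?addrNK.
Qed.

Lemma cross_bound d (ord : 'I_(2 * d) -> dir d) (rho0 : point d -> 'I_(2 * d))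
  (T : nat) (x y : point d) (e : dir d) :
  0 < 2 * d -> injective ord -> y = shift x e ->
  2 * d * crossings ord rho0 T x y <= exits ord rho0 T x + 2 * d - 1 /\
  exits ord rho0 T x <= 2 * d * crossings ord rho0 T x y + 2 * d - 1.
Proof.
move=> m0 inj ->.
have : e \in codom ord.
  apply: (inj_card_onto inj).
  by rewrite card_prod !card_ord card_bool mulnC.
case/codomP => i0 Hi0.
have Hc : crossings ord rho0 T x (shift x e) =
  count (fun k => 2 * d %| ((rho0 x).+1 + (2 * d - i0)) + k) (iota 0 (exits ord rho0 T x)).
  rewrite /crossings /exits -count_reindex.
  apply: eq_count => t /=.
  case He: (exits_at ord rho0 t x) => //=.
  rewrite (@step_pos _ _ _ _ _ He).
  have -> : (shift x (ord (ordS (rotor (agg_state ord rho0 t) x))) == shift x e)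
            = (ordS (rotor (agg_state ord rho0 t) x) == i0).
    apply/eqP/eqP => [/shift_inj|->]; last by rewrite Hi0.
    by rewrite Hi0 => /inj.
  rewrite -val_eqE /= rotor_val // -addn1 modnDml mod_dvd_iff ?ltn_ord //.
  by congr (_ %| _); rewrite /exits; natlia.
rewrite Hc; exact: count_div_bound.
Qed.

Lemma absdiff_bound (a b k : nat) : a <= b + k -> b <= a + k ->
  (`| a%:Z - b%:Z | <= k%:Z)%R.
Proof.
move=> h1 h2; case: (leqP a b) => hab.
  rewrite -normrN opprB (subzn hab) (@ger0_norm _ (b - a)%:Z) ?lez_nat; last exact: (lez_nat 0 (b - a)).
  natlia.
rewrite (subzn (ltnW hab)) (@ger0_norm _ (a - b)%:Z) ?lez_nat; last exact: (lez_nat 0 (a - b)).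
natlia.
Qed.
Theorem lemma5p1 (d n : nat) (ord : 'I_(2 * d) -> dir d) (rho0 : point d -> 'I_(2 * d))
  (T : nat) (x y : point d) :
  2 <= d -> 1 <= n -> injective ord -> final_time ord rho0 n T -> neighbors x y ->
  (`| (exits ord rho0 T y)%:Z - (exits ord rho0 T x)%:Z
        + (2 * d)%:Z * kappa ord rho0 T x y | <= (4 * d - 2)%:Z)%R.
Proof.
move=> d2 _ inj _ [e He].
have m0 : 0 < 2 * d by natlia.
have [A1 A2] := @cross_bound _ ord rho0 T _ _ _ m0 inj He.
have Hx : x = shift y (e.1, ~~ e.2) by rewrite He -shift_sym.
have [B1 B2] := @cross_bound _ ord rho0 T _ _ _ m0 inj Hx.
rewrite /kappa.
set A := exits ord rho0 T y; set B := exits ord rho0 T x.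
set P := crossings ord rho0 T x y; set Q := crossings ord rho0 T y x.
have -> : (A%:Z - B%:Z + (2 * d)%:Z * (P%:Z - Q%:Z) =
           (A + 2 * d * P)%:Z - (B + 2 * d * Q)%:Z)%R.
  by rewrite !PoszD !PoszM mulrBr opprD addrACA.
apply: absdiff_bound; move: A1 A2 B1 B2; rewrite -/A -/B -/P -/Q;
  generalize (2 * d * P) (2 * d * Q) => p q h1 h2 h3 h4; clearbody A B P Q; natlia.
Qed.
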